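(* Let $\mathcal{G}$ be a non-empty class of graphs such that no graph in $\mathcal{G}$ contains $K_{\aleph_0}$, and for every $G\in\mathcal{G}$ and every vertex $v\in V(G)$ the graph $G-v$ contains a subgraph isomorphic to a graph in $\mathcal{G}$. Let $\mathcal{F}$ be the class of graphs that contain no subgraph isomorphic to a graph in $\mathcal{G}$. Then there is no universal graph for $\mathcal{F}$.
   Context: All graphs are simple and countable; $G$ contains $H$ if $H$ is isomorphic to a subgraph of $G$. A graph $U$ is universal for a class $\mathcal{F}$ if $U\in\mathcal{F}$ and $U$ contains every graph in $\mathcal{F}$. *)

(* Defs.v *)
From Stdlib Require Import ProofIrrelevance.

Record Graph : Type := MkGraph {
  vert : Type;
  adj : vert -> vert -> Prop;
  adj_sym : forall x y, adj x y -> adj y x;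
  adj_irrefl : forall x, ~ adj x x;
  vert_countable : exists f : vert -> nat, forall x y, f x = f y -> x = y
}.

Definition contains (G H : Graph) : Prop :=
  exists f : vert H -> vert G,
    (forall x y, f x = f y -> x = y) /\
    (forall x y, adj H x y -> adj G (f x) (f y)).

Definition K_omega : Graph.
Proof.
  refine (MkGraph nat (fun x y => x <> y) _ _ _).
  - intros x y H E; apply H; symmetry; exact E.
  - intros x H; apply H; reflexivity.
  - exists (fun x => x); intros x y E; exact E.
Defined.

Definition del (G : Graph) (v : vert G) : Graph.
Proof.
  refine (MkGraph {x : vert G | x <> v}
            (fun x y => adj G (proj1_sig x) (proj1_sig y)) _ _ _).
  - intros x y H; apply adj_sym; exact H.
  - intros x; apply adj_irrefl.
  - destruct (vert_countable G) as [f Hf].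
    exists (fun x => f (proj1_sig x)).
    intros [x hx] [y hy] E; simpl in E.
    apply Hf in E; subst y.
    assert (hx = hy) as -> by (apply proof_irrelevance); reflexivity.
Defined.

Definition forbidden_class (Gc : Graph -> Prop) (X : Graph) : Prop :=
  ~ exists H, Gc H /\ contains X H.

Definition universal (F : Graph -> Prop) (U : Graph) : Prop :=
  F U /\ forall X, F X -> contains U X.

(* Main.v *)
Require Import Defs.
From Stdlib Require Import Classical Lia Arith.

Definition cone (U : Graph) : Graph.
Proof.
  refine (MkGraph (option (vert U))
    (fun a b => match a, b with
                | Some x, Some y => adj U x y
                | None, Some _ => True
                | Some _, None => True
                | None, None => False end) _ _ _).
  - intros [x|] [y|]; simpl; auto. apply adj_sym.
  - intros [x|]; simpl; auto. apply adj_irrefl.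
  - destruct (vert_countable U) as [f Hf].
    exists (fun a => match a with None => 0 | Some x => S (f x) end).
    intros [x|] [y|] E; try discriminate; auto.
    injection E as E. apply Hf in E. subst; reflexivity.
Defined.

Lemma contains_trans A B C : contains A B -> contains B C -> contains A C.
Proof.
  intros [f [Hf1 Hf2]] [g [Hg1 Hg2]].
  exists (fun x => f (g x)). split; auto.
Qed.

Lemma K_omega_all G : contains K_omega G.
Proof.
  destruct (vert_countable G) as [f Hf].
  exists f. split; auto.
  intros x y Hxy E. simpl in E. apply Hf in E. subst. exact (adj_irrefl G y Hxy).
Qed.

Definition unsome {B} (o : option B) : o <> None -> B :=
  match o return o <> None -> B with
  | Some b => fun _ => b
  | None => fun H => False_rect _ (H eq_refl) end.

Lemma unsome_eq {B} (o : option B) (H : o <> None) : o = Some (unsome o H).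
Proof. destruct o; simpl; [reflexivity| contradiction]. Qed.

Lemma cone_in_F Gc U
  (Hdel : forall G, Gc G -> forall v : vert G,
            exists H, Gc H /\ contains (del G v) H) :
  forbidden_class Gc U -> forbidden_class Gc (cone U).
Proof.
  intros HU [H [HH [f [Hf1 Hf2]]]].
  destruct (classic (exists h, f h = None)) as [[h Eh]|Nh].
  - destruct (Hdel H HH h) as [H' [HH' C']].
    apply HU. exists H'. split; auto.
    eapply contains_trans; [|exact C'].
    assert (Hx : forall x : vert (del H h), f (proj1_sig x) <> None).
    { intros [x hx] E; simpl in E. apply hx. apply Hf1. congruence. }
    exists (fun x => unsome _ (Hx x)). split.
    + intros x y E.
      assert (f (proj1_sig x) = f (proj1_sig y)).
      { rewrite (unsome_eq _ (Hx x)), (unsome_eq _ (Hx y)), E. reflexivity. }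
      apply Hf1 in H0. destruct x as [x hx], y as [y hy]; simpl in H0. subst.
      f_equal. apply proof_irrelevance.
    + intros x y Hxy. simpl in Hxy. apply Hf2 in Hxy.
      rewrite (unsome_eq _ (Hx x)), (unsome_eq _ (Hx y)) in Hxy. exact Hxy.
  - assert (Hx : forall x, f x <> None) by (intros x E; apply Nh; eauto).
    apply HU. exists H. split; auto.
    exists (fun x => unsome _ (Hx x)). split.
    + intros x y E. apply Hf1.
      rewrite (unsome_eq _ (Hx x)), (unsome_eq _ (Hx y)), E. reflexivity.
    + intros x y Hxy. apply Hf2 in Hxy.
      rewrite (unsome_eq _ (Hx x)), (unsome_eq _ (Hx y)) in Hxy. exact Hxy.
Qed.

Lemma cone_Komega U : contains U (cone U) -> contains U K_omega.
Proof.
  intros [g [Hg1 Hg2]].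
  set (e := fun x => g (Some x)). set (c := g None).
  assert (Ha : forall n k, adj U (Nat.iter n e c) (Nat.iter (n + S k) e c)).
  { induction n; intros k.
    - simpl. unfold c. apply (Hg2 None (Some (Nat.iter k e c))). exact I.
    - simpl. unfold e at 1 3. apply (Hg2 (Some _) (Some _)). simpl. apply IHn. }
  assert (Hb : forall n m, n < m -> adj U (Nat.iter n e c) (Nat.iter m e c)).
  { intros n m Hnm. replace m with (n + S (m - n - 1)) by lia. apply Ha. }
  exists (fun n => Nat.iter n e c). split.
  - intros n m E. destruct (lt_eq_lt_dec n m) as [[L|L]|L]; auto.
    + exfalso. pose proof (Hb _ _ L) as A. rewrite E in A. exact (adj_irrefl U _ A).
    + exfalso. pose proof (Hb _ _ L) as A. rewrite E in A. exact (adj_irrefl U _ A).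
  - intros n m Hnm. simpl in Hnm. destruct (lt_eq_lt_dec n m) as [[L|L]|L].
    + auto.
    + contradiction.
    + apply adj_sym. auto.
Qed.

Theorem mainTheorem10 (Gc : Graph -> Prop)
  (Hne : exists G, Gc G)
  (HK : forall G, Gc G -> ~ contains G K_omega)
  (Hdel : forall G, Gc G -> forall v : vert G,
            exists H, Gc H /\ contains (del G v) H) :
  ~ exists U, universal (forbidden_class Gc) U.
Proof.
  intros [U [HU Huniv]].
  pose proof (cone_Komega U (Huniv _ (cone_in_F Gc U Hdel HU))) as K.
  destruct Hne as [G0 HG0].
  apply HU. exists G0. split; auto.
  eapply contains_trans; [exact K|]. apply K_omega_all.
Qed.
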